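(* Let $\mathcal H=\bigoplus_{n\ge0}\mathcal H_n$ be a connected graded Hopf algebra over a field $\mathbb K$ of characteristic zero, let $\alpha:\mathcal H_1\to\mathbb K$ be a nonzero linear map and let $q=q_\alpha$ be the associated inverse-factorial character. Then $q$ is multiplicative: $q(xy)=q(x)q(y)$ for all $x,y\in\mathcal H$. Moreover, write $q=\varepsilon+\varphi$ with $\varphi(\mathbf 1)=0$ and, for $h\in\mathbb K$, set $q^{*h}(x):=\sum_{p\ge0}\binom{h}{p}\varphi^{*p}(x)$ (a finite sum for each $x$). Then for every $h\in\mathbb K$, $q^{*h}$ is a character of $\mathcal H$ and $$q^{*h}(x)=h^{|x|}\,q(x)$$ for every homogeneous $x\in\mathcal H$.
   Context: A connected graded Hopf algebra is $\mathcal H=\bigoplus_{n\ge0}\mathcal H_n$ with $\mathcal H_0=\mathbb K\mathbf 1$, product and coproduct $\Delta$ respecting the grading; $|x|$ is the degree of a homogeneous $x$, $\varepsilon$ the counit. Sweedler notation: $\Delta(x)=\sum_{(x)}x_1\otimes x_2$; the reduced coproduct is $\Delta'(x)=\Delta(x)-x\otimes\mathbf 1-\mathbf 1\otimes x=\sum'_{(x)}x'\otimes x''$, where for homogeneous $x$ the $x',x''$ may be taken homogeneous of degrees $<|x|$ adding up to $|x|$. Convolution of linear forms: $(\phi*\psi)(x)=\sum_{(x)}\phi(x_1)\psi(x_2)$, with unit $\varepsilon$; $\varphi^{*0}=\varepsilon$. The inverse-factorial character $q_\alpha$ is the linear form on $\mathcal H$ determined by $q_\alpha(\mathbf 1)=1$,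 $q_\alpha|_{\mathcal H_1}=\alpha$, and for homogeneous $x$ with $|x|\ge2$: $q_\alpha(x)=\frac{1}{2^{|x|}-2}\sum'_{(x)}q_\alpha(x')q_\alpha(x'')$ (equivalently $q_\alpha*q_\alpha(x)=2^{|x|}q_\alpha(x)$ for all homogeneous $x$). *)

(* Defs.v *)
From HB Require Import structures.
From mathcomp Require Import all_boot all_order all_algebra.
From Stdlib Require Import ClassicalEpsilon.
Set Implicit Arguments. Unset Strict Implicit. Unset Printing Implicit Defensive.
Import Order.TTheory GRing.Theory Num.Theory.
Local Open Scope ring_scope.

Definition linform (K : fieldType) (H : lmodType K) (f : H -> K) : Prop :=
  forall (a : K) (x y : H), f (a *: x + y) = a * f x + f y.

(* Elements of H (x) H are represented by finite sums  sum_i u_i.1 (x) u_i.2,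
   i.e. by sequences of pairs.  Two such representations denote the same
   tensor iff every pair of linear forms f,g gives the same value of
   sum_i f(u_i.1) g(u_i.2)  (the dual separates points of H (x) H over a field). *)
Definition teq (K : fieldType) (H : lmodType K) (s t : seq (H * H)) : Prop :=
  forall f g : H -> K, linform f -> linform g ->
    \sum_(u <- s) f u.1 * g u.2 = \sum_(u <- t) f u.1 * g u.2.

(* A connected graded Hopf algebra over K.  The grading is given by the family
   of projections proj n : H -> H_n; the coproduct cop x is a Sweedler
   representation of Delta(x). *)
Record cgHopf (K : fieldType) (H : algType K) := CGHopf {
  proj : nat -> H -> H;
  cop : H -> seq (H * H);
  eps : H -> K;
  anti : H -> H;
  proj_lin : forall n (a : K) (x y : H),
      proj n (a *: x + y) = a *: proj n x + proj n y;
  proj_proj : forall n m x, proj n (proj m x) = if n == m then proj m x else 0;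
  proj_fin : forall x, exists N, forall n, (N <= n)%N -> proj n x = 0;
  proj_sum : forall x N, (forall n, (N <= n)%N -> proj n x = 0) ->
      x = \sum_(n < N) proj n x;
  mul_graded : forall n m x y, proj n x = x -> proj m y = y ->
      proj (n + m) (x * y) = x * y;
  one_graded : proj 0 1 = 1;
  connected : forall x, proj 0 x = x -> exists c : K, x = c *: 1;
  cop_lin : forall (a : K) x y,
      teq (cop (a *: x + y)) ([seq (a *: u.1, u.2) | u <- cop x] ++ cop y);
  coassoc : forall x (f g k : H -> K), linform f -> linform g -> linform k ->
      \sum_(u <- cop x) (\sum_(v <- cop u.1) f v.1 * g v.2) * k u.2 =
      \sum_(u <- cop x) f u.1 * (\sum_(v <- cop u.2) g v.1 * k v.2);
  eps_lin : linform eps;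
  counitl : forall x, \sum_(u <- cop x) eps u.1 *: u.2 = x;
  counitr : forall x, \sum_(u <- cop x) eps u.2 *: u.1 = x;
  (* coproduct respects grading: for x in H_n, Delta x in sum_p H_p (x) H_(n-p) *)
  cop_graded : forall n x, proj n x = x ->
      teq (cop x) [seq (proj p.2 p.1.1, proj (n - p.2) p.1.2)
                   | p <- [seq (u, i) | u <- cop x, i <- iota 0 n.+1]];
  eps_graded : forall n x, (0 < n)%N -> proj n x = x -> eps x = 0;
  cop_mul : forall x y,
      teq (cop (x * y)) [seq (u.1 * v.1, u.2 * v.2) | u <- cop x, v <- cop y];
  cop_one : teq (cop 1) [:: (1, 1)];
  eps_mul : forall x y, eps (x * y) = eps x * eps y;
  eps_one : eps 1 = 1;
  anti_lin : forall (a : K) x y, anti (a *: x + y) = a *: anti x + anti y;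
  antil : forall x, \sum_(u <- cop x) anti u.1 * u.2 = eps x *: 1;
  antir : forall x, \sum_(u <- cop x) u.1 * anti u.2 = eps x *: 1
}.

Section Ops.
Variables (K : fieldType) (H : algType K) (HH : cgHopf H).

Definition conv (phi psi : H -> K) : H -> K :=
  fun x => \sum_(u <- cop HH x) phi u.1 * psi u.2.

Fixpoint convpow (phi : H -> K) (p : nat) : H -> K :=
  match p with
  | 0 => eps HH
  | p'.+1 => conv phi (convpow phi p')
  end.

Definition gbnd (x : H) : nat :=
  proj1_sig (constructive_indefinite_description _ (proj_fin HH x)).

Definition gbinom (h : K) (p : nat) : K :=
  (\prod_(i < p) (h - i%:R)) / (p`!)%:R.

(* q^{*h}(x) := sum_(p >= 0) binom(h,p) phi^{*p}(x) with phi = q - eps;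
   the terms with p > gbnd x vanish, so the sum is truncated there. *)
Definition qpow (q : H -> K) (h : K) : H -> K :=
  fun x => \sum_(p < (gbnd x).+1)
             gbinom h p * convpow (fun y => q y - eps HH y) p x.

Definition is_qalpha (alpha q : H -> K) : Prop :=
  linform q /\ q 1 = 1 /\
  (forall x, proj HH 1 x = x -> q x = alpha x) /\
  (forall n x, (2 <= n)%N -> proj HH n x = x ->
     q x = (2%:R ^+ n - 2%:R)^-1 *
           (\sum_(u <- cop HH x) q u.1 * q u.2 - q x * q 1 - q 1 * q x)).

Definition is_character (f : H -> K) : Prop :=
  linform f /\ f 1 = 1 /\ forall x y, f (x * y) = f x * f y.

End Ops.

(* Main.v *)
Require Import Defs.
From HB Require Import structures.
From mathcomp Require Import all_boot all_order all_algebra.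
Import Order.TTheory GRing.Theory Num.Theory.
Local Open Scope ring_scope.
From mathcomp Require Import ring zify.
From Stdlib Require Import ClassicalEpsilon.
Set Implicit Arguments. Unset Strict Implicit. Unset Printing Implicit Defensive.

Section Lin.
Variables (K : fieldType) (H : lmodType K).

Lemma lin0 (f : H -> K) : linform f -> f 0 = 0.
Proof.
move=> lf; have := lf 1 0 0; rewrite scale1r addr0 mul1r.
by move/(congr1 (fun z => z - f 0)); rewrite addrK subrr => <-.
Qed.

Lemma linZ (f : H -> K) a x : linform f -> f (a *: x) = a * f x.
Proof. by move=> lf; rewrite -[a *: x]addr0 lf lin0 // addr0. Qed.

Lemma linD (f : H -> K) x y : linform f -> f (x + y) = f x + f y.
Proof. by move=> lf; rewrite -[x]scale1r lf mul1r scale1r. Qed.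

Lemma lin_sum (f : H -> K) I (r : seq I) (F : I -> H) : linform f ->
  f (\sum_(i <- r) F i) = \sum_(i <- r) f (F i).
Proof.
move=> lf; elim: r => [|i r IH]; first by rewrite !big_nil lin0.
by rewrite !big_cons linD // IH.
Qed.

Lemma lin_sum_ord (f : H -> K) n (F : 'I_n -> H) : linform f ->
  f (\sum_(i < n) F i) = \sum_(i < n) f (F i).
Proof. exact: lin_sum. Qed.

Lemma linform_comp (f : H -> K) (g : H -> H) : linform f ->
  (forall a x y, g (a *: x + y) = a *: g x + g y) -> linform (fun x => f (g x)).
Proof. by move=> lf lg a x y /=; rewrite lg lf. Qed.

End Lin.
Section Hopf.
Variables (K : fieldType) (H : algType K) (HH : cgHopf H).
Local Notation cop := (cop HH).
Local Notation eps := (eps HH).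
Local Notation proj := (proj HH).
Local Notation conv := (conv HH).
Local Notation convpow := (convpow HH).
Implicit Types (f g k : H -> K) (s t : seq (H * H)) (x y : H).

Lemma teqE s t f g : teq s t -> linform f -> linform g ->
  \sum_(u <- s) f u.1 * g u.2 = \sum_(u <- t) f u.1 * g u.2.
Proof. by move=> st lf lg; apply: st. Qed.

Lemma conv_lin f g : linform f -> linform g -> linform (conv f g).
Proof.
move=> lf lg a x y; rewrite /Defs.conv (teqE (cop_lin HH a x y)) //.
rewrite big_cat big_map /= mulr_sumr; congr (_ + _).
by apply: eq_bigr => u _; rewrite linZ // mulrA.
Qed.

Lemma proj_linform n : forall a x y, proj n (a *: x + y) = a *: proj n x + proj n y.
Proof. exact: proj_lin. Qed.

Lemma conv_epsl g x : linform g -> conv eps g x = g x.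
Proof.
move=> lg; rewrite /Defs.conv -[in RHS](counitl HH x) lin_sum //.
by apply: eq_bigr => u _; rewrite linZ.
Qed.

Lemma conv_epsr f x : linform f -> conv f eps x = f x.
Proof.
move=> lf; rewrite /Defs.conv -[in RHS](counitr HH x) lin_sum //.
by apply: eq_bigr => u _; rewrite linZ // mulrC.
Qed.

Lemma conv_ext f (f' : H -> K) g (g' : H -> K) x : (forall y, f y = f' y) -> (forall y, g y = g' y) ->
  conv f g x = conv f' g' x.
Proof. by move=> ef eg; apply: eq_bigr => u _; rewrite ef eg. Qed.

Lemma conv_assoc f g k x : linform f -> linform g -> linform k ->
  conv f (conv g k) x = conv (conv f g) k x.
Proof. by move=> lf lg lk; rewrite /Defs.conv (coassoc HH x lf lg lk). Qed.

Lemma convpow_lin f p : linform f -> linform (convpow f p).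
Proof.
move=> lf; elim: p => [|p IH] /=; first exact: eps_lin.
exact: conv_lin.
Qed.

Lemma convpow_ext f (f' : H -> K) p x : (forall y, f y = f' y) -> convpow f p x = convpow f' p x.
Proof.
move=> ef; elim: p x => [|p IH] x //=.
exact: conv_ext.
Qed.

Lemma convpow_add f a b x : linform f ->
  convpow f (a + b) x = conv (convpow f a) (convpow f b) x.
Proof.
move=> lf; elim: a x => [|a IH] x /=.
  by rewrite add0n conv_epsl //; apply: convpow_lin.
rewrite -conv_assoc //; try exact: convpow_lin.
by apply: conv_ext.
Qed.

End Hopf.
Section Grad.
Variables (K : fieldType) (H : algType K) (HH : cgHopf H).
Local Notation cop := (cop HH).
Local Notation eps := (eps HH).
Local Notation proj := (proj HH).
Local Notation conv := (conv HH).
Local Notation convpow := (convpow HH).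
Implicit Types (f g k : H -> K) (s t : seq (H * H)) (x y z : H).

Lemma projK n z : proj n (proj n z) = proj n z.
Proof. by rewrite proj_proj eqxx. Qed.

Lemma projF f n : linform f -> linform (fun z => f (proj n z)).
Proof. by move=> lf; apply: linform_comp => //; apply: proj_lin. Qed.

Lemma proj_decomp z : exists M, (forall n, (M <= n)%N -> proj n z = 0) /\
   z = \sum_(n < M) proj n z.
Proof.
have [M HM] := proj_fin HH z; exists M; split => //.
exact: proj_sum.
Qed.

Lemma eps_proj0 z : eps (proj 0 z) = eps z.
Proof.
have [M HM] := proj_fin HH z.
have hz := @proj_sum _ _ HH z M.+1 (fun n hn => HM n (ltnW hn)).
rewrite [in RHS]hz lin_sum; last exact: eps_lin.
rewrite big_ord_recl /= big1 ?addr0 // => i _.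
by apply: (eps_graded (n := i.+1)) => //; rewrite projK.
Qed.

Lemma proj0E z : proj 0 z = eps z *: 1.
Proof.
have [c hc] := connected (projK 0 z).
have := eps_proj0 z; rewrite hc linZ ?eps_one ?mulr1; last exact: eps_lin.
by move=> ->.
Qed.

Lemma counit_projr f n x : proj n x = x -> linform f ->
  \sum_(u <- cop x) f (proj n u.1) * eps u.2 = f x.
Proof.
move=> hx lf; rewrite -[in RHS]hx -[in RHS](counitr HH x).
rewrite (lin_sum _ _ (projF n lf)); apply: eq_bigr => u _.
by rewrite (linZ _ _ (projF n lf)) mulrC.
Qed.

Lemma counit_projl f n x : proj n x = x -> linform f ->
  \sum_(u <- cop x) eps u.1 * f (proj n u.2) = f x.
Proof.
move=> hx lf; rewrite -[in RHS]hx -[in RHS](counitl HH x).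
rewrite (lin_sum _ _ (projF n lf)); apply: eq_bigr => u _.
by rewrite (linZ _ _ (projF n lf)).
Qed.

Lemma graded_expand f g n x : proj n x = x -> linform f -> linform g ->
  \sum_(u <- cop x) f u.1 * g u.2 =
  \sum_(u <- cop x) \sum_(p <- iota 0 n.+1) f (proj p u.1) * g (proj (n - p) u.2).
Proof.
move=> hx lf lg; rewrite (teqE (cop_graded hx)) // big_map big_allpairs.
by [].
Qed.

End Grad.
From mathcomp Require Import ring zify.
From Stdlib Require Import ClassicalEpsilon.
Section Q.
Variables (K : fieldType) (H : algType K) (HH : cgHopf H).
Variable charK0 : [pchar K] =i pred0.
Variable q : H -> K.
Hypothesis qlin : linform q.
Hypothesis q1 : q 1 = 1.
Hypothesis qrec : forall n x, (2 <= n)%N -> proj HH n x = x ->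
     q x = (2%:R ^+ n - 2%:R)^-1 *
           (\sum_(u <- cop HH x) q u.1 * q u.2 - q x * q 1 - q 1 * q x).
Local Notation cop := (cop HH).
Local Notation eps := (eps HH).
Local Notation proj := (proj HH).
Local Notation conv := (conv HH).
Local Notation convpow := (convpow HH).
Implicit Types (f g : H -> K) (s t : seq (H * H)) (x y z : H).

Lemma q_proj0 z : q (proj 0 z) = eps z.
Proof. by rewrite proj0E linZ // q1 mulr1. Qed.

Lemma natK_eq0 n : ((n%:R : K) == 0) = (n == 0)%N.
Proof. by move/pcharf0P: charK0; apply. Qed.

Lemma natK_inj a b : (a%:R : K) = b%:R -> a = b.
Proof.
wlog le: a b / (a <= b)%N.
  by move=> W; case/orP: (leq_total a b) => h e; [|apply/esym]; apply: W.
move=> e; have : ((b - a)%N%:R : K) == 0 by rewrite natrB // e subrr.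
by rewrite natK_eq0 subn_eq0 => h; apply/eqP; rewrite eqn_leq le h.
Qed.

Lemma two_pow_ne n : (2 <= n)%N -> (2%:R ^+ n - 2%:R : K) != 0.
Proof.
move=> hn; have h4 : (2 ^ 2 <= 2 ^ n)%N by rewrite leq_exp2l.
rewrite -natrX -natrB; last by apply: leq_trans h4.
rewrite natK_eq0 subn_eq0 -ltnNge.
by apply: leq_trans h4.
Qed.

Lemma qq_hom n x : proj n x = x -> conv q q x = 2%:R ^+ n * q x.
Proof.
move=> hx; case: n hx => [|[|n]] hx.
- rewrite /Defs.conv (graded_expand hx) //= expr0 mul1r.
  rewrite -[in RHS](counit_projl hx qlin); apply: eq_bigr => u _.
  by rewrite big_cons big_nil addr0 q_proj0.
- rewrite /Defs.conv (graded_expand hx) //= expr1.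
  rewrite mulr2n mulrDl mul1r.
  rewrite -[in X in X + _](counit_projl hx qlin).
  rewrite -[in X in _ + X](counit_projr hx qlin) -big_split /=.
  apply: eq_bigr => u _.
  by rewrite !big_cons big_nil addr0 !q_proj0 /= mulrC.
- have h2 : (2 <= n.+2)%N by [].
  have e1 := qrec h2 hx.
  have ne := two_pow_ne h2.
  have e2 : (2%:R ^+ n.+2 - 2%:R) * q x = conv q q x - q x - q x.
    by rewrite [in LHS]e1 mulVKf // q1 mulr1 mul1r /Defs.conv.
  have e3 : conv q q x = (2%:R ^+ n.+2 - 2%:R) * q x + q x + q x.
    by rewrite e2; ring.
  by rewrite e3; ring.
Qed.

Lemma conv_scaled (t : K) chi n x : linform chi ->
  (forall d z, proj d z = z -> chi z = t ^+ d * q z) -> proj n x = x ->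
  conv chi chi x = t ^+ n * conv q q x.
Proof.
move=> lc hc hx.
rewrite /Defs.conv (graded_expand hx lc lc) (graded_expand hx qlin qlin) mulr_sumr.
apply: eq_bigr => u _; rewrite mulr_sumr big_seq [in RHS]big_seq.
apply: eq_bigr => p; rewrite mem_iota add0n ltnS => /andP [_ hp].
rewrite (hc p _ (projK _ _ _)) (hc (n - p)%N _ (projK _ _ _)).
rewrite -{3}(subnKC hp) exprD; ring.
Qed.

Lemma pow2 j d z : proj d z = z ->
  convpow q (2 ^ j) z = ((2 ^ j)%N%:R) ^+ d * q z.
Proof.
elim: j d z => [|j IH] d z hz.
  by rewrite expn0 /= conv_epsr // expr1n mul1r.
rewrite expnS mul2n -addnn convpow_add // (conv_scaled (convpow_lin _ _ qlin) IH hz).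
rewrite (qq_hom hz) natrD.
have -> : ((2 ^ j)%N%:R + (2 ^ j)%N%:R : K) = 2%:R * (2 ^ j)%N%:R by ring.
rewrite exprMn; ring.
Qed.
Definition phi := fun y => q y - eps y.

Lemma phi_lin : linform phi.
Proof. by move=> a x y; rewrite /phi qlin (eps_lin HH); ring. Qed.

Lemma phi_proj0 z : phi (proj 0 z) = 0.
Proof. by rewrite /phi q_proj0 eps_proj0 subrr. Qed.

Lemma phipow_vanish p n x : (n < p)%N -> proj n x = x -> convpow phi p x = 0.
Proof.
elim: p n x => [|p IH] n x //= hnp hx.
rewrite /Defs.conv (graded_expand hx phi_lin (convpow_lin _ _ phi_lin)).
apply: big1 => u _; rewrite big_seq; apply: big1 => i.
rewrite mem_iota add0n ltnS => /andP [_ hi].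
case: i hi => [|i] hi; first by rewrite phi_proj0 mul0r.
rewrite (IH (n - i.+1)%N) ?mulr0 ?projK //.
by rewrite ltn_subLR // addSn ltnS (leq_trans _ (leq_addl _ _)) // -ltnS.
Qed.

Lemma bump0 i : bump 0 i = i.+1.
Proof. by rewrite /bump leq0n add1n. Qed.

Lemma pascal (c : nat -> K) m :
  \sum_(p < m.+1) 'C(m, p)%:R * (c p + c p.+1) =
  \sum_(p < m.+2) 'C(m.+1, p)%:R * c p.
Proof.
under eq_bigr => i _ do rewrite mulrDr.
rewrite big_split /= [in RHS]big_ord_recl /=.

under [in RHS]eq_bigr => i _ do rewrite bump0 binS natrD mulrDl.
rewrite big_split /= [X in X + _ = _]big_ord_recl /= !bin0 addrA; congr (_ + _).
under [X in _ + X = _]eq_bigr => i _ do rewrite bump0.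
congr (_ + _); rewrite [in RHS]big_ord_recr /= bin_small // mul0r addr0.
by [].
Qed.

Lemma conv_q_split g x : linform g -> conv q g x = g x + conv phi g x.
Proof.
move=> lg; rewrite -(conv_epsl HH x lg) /Defs.conv -big_split /=.
by apply: eq_bigr => u _; rewrite /phi -mulrDl addrC subrK.
Qed.

Lemma binom_exp k x :
  convpow q k x = \sum_(p < k.+1) 'C(k, p)%:R * convpow phi p x.
Proof.
elim: k x => [|k IH] x.
  by rewrite big_ord_recl big_ord0 /= bin0 mul1r addr0.
rewrite -(pascal (fun p => convpow phi p x)) /= /Defs.conv.

rewrite (eq_bigr (fun u => \sum_(p < k.+1) q u.1 * ('C(k, p)%:R * convpow phi p u.2))); last by move=> u _; rewrite IH mulr_sumr.
rewrite exchange_big /=; apply: eq_bigr => p _.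
have E := conv_q_split x (convpow_lin HH p phi_lin); rewrite /Defs.conv in E.
by rewrite -E mulr_sumr; apply: eq_bigr => u _; rewrite mulrCA.
Qed.

Lemma sum_trunc (F : nat -> K) a b : (a <= b)%N ->
  (forall i, (a <= i)%N -> F i = 0) -> \sum_(i < b) F i = \sum_(i < a) F i.
Proof.
move=> hab hF; rewrite (big_ord_widen _ _ hab) [LHS](bigID (fun i : 'I_b => (i < a)%N)) /=.
rewrite [X in _ + X]big1 ?addr0 // => i; rewrite -leqNgt; exact: hF.
Qed.

Lemma sum_bound_eq (F : nat -> K) a b : (forall i, (a <= i)%N -> F i = 0) ->
  (forall i, (b <= i)%N -> F i = 0) -> \sum_(i < a) F i = \sum_(i < b) F i.
Proof.
move=> ha hb; case/orP: (leq_total a b) => h.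
  by rewrite (sum_trunc h ha).
by rewrite (sum_trunc h hb).
Qed.

Lemma fact_neq0 p : ((p`!)%:R : K) != 0.
Proof. by rewrite natK_eq0 -lt0n fact_gt0. Qed.

Lemma gbinom_nat k p : gbinom (k%:R : K) p = 'C(k, p)%:R.
Proof.
rewrite /gbinom; case: (leqP p k) => hpk.
  have -> : \prod_(i < p) ((k%:R : K) - i%:R) = (k ^_ p)%:R.
    rewrite ffact_prod natr_prod; apply: eq_bigr => i _.
    by rewrite natrB // ltnW // (leq_trans (ltn_ord i) hpk).
  by rewrite -bin_ffact natrM mulfK // fact_neq0.
rewrite bin_small // (bigD1 (Ordinal hpk)) //= subrr !mul0r.
by [].
Qed.

Lemma main_hom n x (h : K) : proj n x = x ->
  \sum_(p < n.+1) gbinom h p * convpow phi p x = h ^+ n * q x.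
Proof.
move=> hx.
pose P : {poly K} := \sum_(p < n.+1) (convpow phi p x / (p`!)%:R) *:
   \prod_(0 <= i < p) ('X - (i%:R)%:P) - (q x) *: 'X^n.
have Pev : forall w : K, P.[w] = \sum_(p < n.+1) gbinom w p * convpow phi p x - w ^+ n * q x.
  move=> w; rewrite /P hornerD hornerN horner_sum hornerZ hornerXn mulrC; congr (_ - _).
  apply: eq_bigr => p _; rewrite hornerZ horner_prod /gbinom big_mkord.
  under eq_bigr => i _ do rewrite hornerXsubC.
  by rewrite mulrC mulrA mulrAC.
have Psz : (size P <= n.+1)%N.
  rewrite (leq_trans (size_polyD _ _)) // geq_max size_polyN.
  rewrite (leq_trans (size_scale_leq _ _)) ?size_polyXn // andbT.
  rewrite (leq_trans (size_sum _ _ _)) //; apply/bigmax_leqP => p _.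
  rewrite (leq_trans (size_scale_leq _ _)) // size_prod_XsubC size_iota subn0.
  exact: ltn_ord.
pose rs := [seq ((2 ^ j)%N%:R : K) | j <- iota 0 n.+1].
have rsu : uniq rs.
  rewrite map_inj_uniq ?iota_uniq // => a b /natK_inj; exact: expnI.
have rsr : all (root P) rs.
  apply/allP => w /mapP [j _ ->]; rewrite /root Pev subr_eq0 -(pow2 j hx).
  apply/eqP; rewrite binom_exp.
  under eq_bigr => p _ do rewrite gbinom_nat.
  apply: (sum_bound_eq (F := fun p => 'C(2 ^ j, p)%:R * convpow phi p x)) => i hi.
    by rewrite (phipow_vanish hi hx) mulr0.
  by rewrite bin_small // mul0r.
have P0 : P = 0.
  apply/eqP; apply: contraT => nz.
  have := max_poly_roots nz rsr rsu.
  by rewrite size_map size_iota ltnNge Psz.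
by apply/eqP; rewrite -subr_eq0 -Pev P0 horner0.
Qed.

Lemma gbndP x n : (gbnd HH x <= n)%N -> proj n x = 0.
Proof. exact: (proj2_sig (constructive_indefinite_description _ (proj_fin HH x))). Qed.

Lemma qpow_trunc_sum h x B : (forall n, (B <= n)%N -> proj n x = 0) ->
  \sum_(p < B) gbinom h p * convpow phi p x = \sum_(n < B) h ^+ n * q (proj n x).
Proof.
move=> hB.
have E : forall p, convpow phi p x = \sum_(n < B) convpow phi p (proj n x).
  move=> p; rewrite [in LHS](proj_sum hB).
  exact: (lin_sum _ _ (convpow_lin HH p phi_lin)).
under eq_bigr => p _ do rewrite E mulr_sumr.
rewrite exchange_big /=; apply: eq_bigr => n _.
rewrite -(main_hom h (projK HH n x)).
apply: (sum_trunc (F := fun p => gbinom h p * convpow phi p (proj n x))).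
  exact: ltn_ord.
by move=> i hi; rewrite (phipow_vanish hi (projK HH n x)) mulr0.
Qed.

Lemma qpow_formula h x M : (forall n, (M <= n)%N -> proj n x = 0) ->
  qpow HH q h x = \sum_(n < M) h ^+ n * q (proj n x).
Proof.
move=> hM; have hb : forall n, ((gbnd HH x).+1 <= n)%N -> proj n x = 0.
  by move=> n hn; apply: gbndP; apply: ltnW.
rewrite /qpow (qpow_trunc_sum h hb).
apply: (sum_bound_eq (F := fun n => h ^+ n * q (proj n x))) => i hi.
  by rewrite hb // lin0 // mulr0.
by rewrite hM // lin0 // mulr0.
Qed.

Lemma qpow_hom h n x : proj n x = x -> qpow HH q h x = h ^+ n * q x.
Proof.
move=> hx; rewrite (@qpow_formula h x n.+1).
  rewrite big_ord_recr /= big1 ?add0r ?hx // => i _.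
  by rewrite -hx proj_proj (ltn_eqF (ltn_ord i)) lin0 // mulr0.
by move=> m hm; rewrite -hx proj_proj (gtn_eqF hm).
Qed.

Lemma qpow_lin h : linform (qpow HH q h).
Proof.
move=> a x y.
have [Mx [hMx _]] := proj_decomp HH x.
have [My [hMy _]] := proj_decomp HH y.
pose M := maxn Mx My.
have bx : forall n, (M <= n)%N -> proj n x = 0.
  by move=> n hn; apply: hMx; apply: leq_trans hn; apply: leq_maxl.
have by_ : forall n, (M <= n)%N -> proj n y = 0.
  by move=> n hn; apply: hMy; apply: leq_trans hn; apply: leq_maxr.
rewrite (@qpow_formula h x M bx) (@qpow_formula h y M by_) (@qpow_formula h (a *: x + y) M).
  rewrite mulr_sumr -big_split /=; apply: eq_bigr => n _.
  by rewrite proj_lin qlin; ring.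
by move=> n hn; rewrite proj_lin bx ?by_ // scaler0 addr0.
Qed.
Lemma sum_iota_pick (F : nat -> K) a k : (a < k)%N ->
  \sum_(i <- iota 0 k) (if i == a then F i else 0) = F a.
Proof.
elim: k => // k IH ha; rewrite -addn1 iotaD add0n big_cat /= big_cons big_nil addr0.
case: (eqVneq a k) => [<-|ne].
  rewrite big1_seq ?add0r // => i /andP [_].
  by rewrite mem_iota add0n => /ltn_eqF ->.
rewrite addr0 IH //.
by move: ha ne; rewrite ltnS leq_eqVlt => /orP [->|].
Qed.

Lemma sum_if2 (I J : Type) (s : seq I) (t : seq J) (b : bool) (X : I -> J -> K) :
  \sum_(i <- s) \sum_(j <- t) (if b then X i j else 0) =
  if b then \sum_(i <- s) \sum_(j <- t) X i j else 0.
Proof. by case: b => //; rewrite big1 // => i _; rewrite big1. Qed.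

Lemma sum4_3 (I J : Type) (r1 : seq I) (r2 : seq nat) (r3 : seq J) (r4 : seq nat)
  (A B C : I -> nat -> J -> nat -> K) :
  \sum_(i <- r1) \sum_(p <- r2) \sum_(j <- r3) \sum_(s <- r4)
      (A i p j s + B i p j s + C i p j s) =
  \sum_(i <- r1) \sum_(p <- r2) \sum_(j <- r3) \sum_(s <- r4) A i p j s +
  \sum_(i <- r1) \sum_(p <- r2) \sum_(j <- r3) \sum_(s <- r4) B i p j s +
  \sum_(i <- r1) \sum_(p <- r2) \sum_(j <- r3) \sum_(s <- r4) C i p j s.
Proof.
rewrite -!big_split; apply: eq_bigr => i _; rewrite -!big_split.
apply: eq_bigr => p _; rewrite -!big_split; apply: eq_bigr => j _.
by rewrite -!big_split.
Qed.

Lemma sum4_prod (I J : Type) (r1 : seq I) (r2 : seq nat) (r3 : seq J) (r4 : seq nat)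
  (a : I -> nat -> K) (b : J -> nat -> K) :
  \sum_(i <- r1) \sum_(p <- r2) \sum_(j <- r3) \sum_(s <- r4) (a i p * b j s) =
  (\sum_(i <- r1) \sum_(p <- r2) a i p) * (\sum_(j <- r3) \sum_(s <- r4) b j s).
Proof.
rewrite mulr_suml; apply: eq_bigr => i _; rewrite mulr_suml; apply: eq_bigr => p _.
rewrite mulr_sumr; apply: eq_bigr => j _; rewrite mulr_sumr; apply: eq_bigr => s _.
by [].
Qed.

Lemma qmulr_lin c : linform (fun a => q (a * c)).
Proof. by move=> k a b /=; rewrite mulrDl -scalerAl qlin. Qed.

Lemma qmull_lin c : linform (fun a => q (c * a)).
Proof. by move=> k a b /=; rewrite mulrDr -scalerAr qlin. Qed.

Lemma homE0 x : proj 0 x = x -> x = eps x *: 1.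
Proof. by move=> hx; rewrite -[in LHS]hx proj0E. Qed.


Lemma q_proj0l a b : q (proj 0 a * b) = eps a * q b.
Proof. by rewrite proj0E -scalerAl mul1r linZ. Qed.

Lemma q_proj0r a b : q (a * proj 0 b) = eps b * q a.
Proof. by rewrite proj0E -scalerAr mulr1 linZ. Qed.

Lemma sum2_prod (I J : Type) (r1 : seq I) (r3 : seq J) (a : I -> K) (b : J -> K) :
  \sum_(i <- r1) \sum_(j <- r3) (a i * b j) =
  (\sum_(i <- r1) a i) * (\sum_(j <- r3) b j).
Proof.
by rewrite mulr_suml; apply: eq_bigr => i _; rewrite mulr_sumr.
Qed.

Lemma dbl_counit_l n m x y : proj n x = x -> proj m y = y ->
  \sum_(u <- cop x) \sum_(v <- cop y)
     (eps u.1 * eps v.1 * q (proj n u.2 * proj m v.2)) = q (x * y).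
Proof.
move=> hx hy.
rewrite -(counit_projl hx (qmulr_lin y)); apply: eq_bigr => u _.
rewrite -(counit_projl hy (qmull_lin (proj n u.2))) mulr_sumr.
by apply: eq_bigr => v _; rewrite /= mulrA [eps u.1 * _]mulrC -!mulrA.
Qed.

Lemma dbl_counit_r n m x y : proj n x = x -> proj m y = y ->
  \sum_(u <- cop x) \sum_(v <- cop y)
     (q (proj n u.1 * proj m v.1) * (eps u.2 * eps v.2)) = q (x * y).
Proof.
move=> hx hy.
rewrite -(counit_projr hx (qmulr_lin y)); apply: eq_bigr => u _.
rewrite -(counit_projr hy (qmull_lin (proj n u.1))) mulr_suml.
by apply: eq_bigr => v _; rewrite /=; ring.
Qed.

Lemma ifand (a b : bool) (X : K) :
  (if a then (if b then X else 0) else 0) = if a && b then X else 0.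
Proof. by case: a. Qed.

Lemma qmul_hom N : forall n m x y, (n + m < N)%N -> proj n x = x -> proj m y = y ->
  q (x * y) = q x * q y.
Proof.
elim: N => // N IH n m x y hN hx hy.
have [n0|hn] := posnP n.
  by subst n; rewrite (homE0 hx) -scalerAl mul1r !linZ // q1 mulr1.
have [m0|hm] := posnP m.
  by subst m; rewrite (homE0 hy) -scalerAr mulr1 !linZ // q1 mulr1 mulrC.
have hxy := mul_graded hx hy.
have h2 : (2 <= n + m)%N by lia.
have e1 := qrec h2 hxy.
pose T (u : H * H) p (v : H * H) r :=
  q (proj p u.1 * proj r v.1) * q (proj (n - p) u.2 * proj (m - r) v.2).
pose T' (u : H * H) p (v : H * H) r :=
  (q (proj p u.1) * q (proj (n - p) u.2)) * (q (proj r v.1) * q (proj (m - r) v.2)).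
pose D00 (u : H * H) (p : nat) (v : H * H) (r : nat) :=
  if p == 0%N then (if r == 0%N then T u p v r - T' u p v r else 0) else 0.
pose Dnm (u : H * H) (p : nat) (v : H * H) (r : nat) :=
  if p == n then (if r == m then T u p v r - T' u p v r else 0) else 0.
have ES1 : \sum_(w <- cop (x * y)) q w.1 * q w.2 =
  \sum_(u <- cop x) \sum_(p <- iota 0 n.+1) \sum_(v <- cop y) \sum_(r <- iota 0 m.+1)
     T u p v r.
  rewrite (teqE (cop_mul HH x y) qlin qlin) big_allpairs_dep /= exchange_big /=.
  rewrite (eq_bigr (fun v => \sum_(u <- cop x) \sum_(p <- iota 0 n.+1)
       q (proj p u.1 * v.1) * q (proj (n - p) u.2 * v.2))); last first.
    by move=> v _; exact: (graded_expand hx (qmulr_lin v.1) (qmulr_lin v.2)).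
  rewrite exchange_big /=; apply: eq_bigr => u _.
  rewrite exchange_big /=; apply: eq_bigr => p _.
  exact: (graded_expand hy (qmull_lin (proj p u.1)) (qmull_lin (proj (n - p) u.2))).
have ES2 : \sum_(u <- cop x) \sum_(p <- iota 0 n.+1) \sum_(v <- cop y)
      \sum_(r <- iota 0 m.+1) T u p v r =
  \sum_(u <- cop x) \sum_(p <- iota 0 n.+1) \sum_(v <- cop y)
      \sum_(r <- iota 0 m.+1) (T' u p v r + D00 u p v r + Dnm u p v r).
  apply: eq_bigr => u _; rewrite big_seq [in RHS]big_seq; apply: eq_bigr => p.
  rewrite mem_iota add0n ltnS => /andP [_ hp].
  apply: eq_bigr => v _; rewrite big_seq [in RHS]big_seq; apply: eq_bigr => r.
  rewrite mem_iota add0n ltnS => /andP [_ hr].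
  rewrite /D00 /Dnm !ifand.
  case E0: ((p == 0%N) && (r == 0%N)); case En: ((p == n) && (r == m)).
  - move/andP: E0 => [/eqP p0 _]; move/andP: En => [/eqP pn _]; lia.
  - by ring.
  - by ring.
  move: E0 En => /negbT E0 /negbT En.
  rewrite !addr0 /T /T' (IH p r) ?projK //; last by lia.
  by rewrite (IH (n - p) (m - r))%N ?projK //; [ring | lia].
have ET' : \sum_(u <- cop x) \sum_(p <- iota 0 n.+1) \sum_(v <- cop y)
      \sum_(r <- iota 0 m.+1) T' u p v r = 2%:R ^+ (n + m) * (q x * q y).
  rewrite /T' sum4_prod -(graded_expand hx qlin qlin) -(graded_expand hy qlin qlin).
  rewrite -/(Defs.conv HH q q x) -/(Defs.conv HH q q y) (qq_hom hx) (qq_hom hy).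
  by rewrite exprD; ring.
have ED00 : \sum_(u <- cop x) \sum_(p <- iota 0 n.+1) \sum_(v <- cop y)
      \sum_(r <- iota 0 m.+1) D00 u p v r = q (x * y) - q x * q y.
  rewrite /D00.
  under eq_bigr => u _ do under eq_bigr => p _ do rewrite sum_if2.
  under eq_bigr => u _ do rewrite (@sum_iota_pick (fun p => \sum_(v <- cop y)
       \sum_(r <- iota 0 m.+1) (if r == 0%N then T u p v r - T' u p v r else 0)) 0 n.+1) //.
  under eq_bigr => u _ do under eq_bigr => v _ do rewrite (@sum_iota_pick
       (fun r => T u 0%N v r - T' u 0%N v r) 0 m.+1) //.
  rewrite /T /T' !subn0.
  under eq_bigr => u _ do under eq_bigr => v _ do rewrite q_proj0l q_proj0 !q_proj0.
  under eq_bigr => u _ do rewrite sumrB.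
  rewrite sumrB; congr (_ - _).
    exact: dbl_counit_l.
  rewrite (eq_bigr (fun u => \sum_(v <- cop y) ((eps u.1 * q (proj n u.2)) *
                                 (eps v.1 * q (proj m v.2))))) //.
  by rewrite sum2_prod (counit_projl hx qlin) (counit_projl hy qlin).
have EDnm : \sum_(u <- cop x) \sum_(p <- iota 0 n.+1) \sum_(v <- cop y)
      \sum_(r <- iota 0 m.+1) Dnm u p v r = q (x * y) - q x * q y.
  rewrite /Dnm.
  under eq_bigr => u _ do under eq_bigr => p _ do rewrite sum_if2.
  under eq_bigr => u _ do rewrite (@sum_iota_pick (fun p => \sum_(v <- cop y)
       \sum_(r <- iota 0 m.+1) (if r == m then T u p v r - T' u p v r else 0)) n n.+1) //.
  under eq_bigr => u _ do under eq_bigr => v _ do rewrite (@sum_iota_pick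
       (fun r => T u n v r - T' u n v r) m m.+1) //.
  rewrite /T /T' !subnn.
  under eq_bigr => u _ do under eq_bigr => v _ do rewrite q_proj0l q_proj0 !q_proj0.
  under eq_bigr => u _ do rewrite sumrB.
  rewrite sumrB; congr (_ - _).
    rewrite -(dbl_counit_r hx hy); apply: eq_bigr => u _; apply: eq_bigr => v _.
    by rewrite mulrC.
  rewrite (eq_bigr (fun u => \sum_(v <- cop y) ((q (proj n u.1) * eps u.2) *
                                 (q (proj m v.1) * eps v.2)))); last first.
    by move=> u _; apply: eq_bigr => v _; ring.
  by rewrite sum2_prod (counit_projr hx qlin) (counit_projr hy qlin).
have ES : \sum_(w <- cop (x * y)) q w.1 * q w.2 =
   2%:R ^+ (n + m) * (q x * q y) + (q (x * y) - q x * q y) + (q (x * y) - q x * q y).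
  by rewrite ES1 ES2 sum4_3 ET' ED00 EDnm.
have ne := two_pow_ne h2.
have e2 : (2%:R ^+ (n + m) - 2%:R) * q (x * y) =
    \sum_(w <- cop (x * y)) q w.1 * q w.2 - q (x * y) - q (x * y).
  by rewrite [in LHS]e1 mulVKf // q1 mulr1 mul1r.
apply: (mulfI ne); rewrite e2 ES; ring.
Qed.

Lemma decomp_lin (f : H -> K) x y : linform f ->
  exists Mx My, [/\ f x = \sum_(n < Mx) f (proj n x), f y = \sum_(m < My) f (proj m y) &
    f (x * y) = \sum_(n < Mx) \sum_(m < My) f (proj n x * proj m y)].
Proof.
move=> lf.
have [Mx [_ ex]] := proj_decomp HH x; have [My [_ ey]] := proj_decomp HH y.
exists Mx, My; split.
- by rewrite [in LHS]ex; apply: lin_sum_ord.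
- by rewrite [in LHS]ey; apply: lin_sum_ord.
have -> : x * y = \sum_(n < Mx) \sum_(m < My) (proj n x * proj m y).
  by rewrite [in LHS]ex [in LHS]ey mulr_suml; apply: eq_bigr => n _; rewrite mulr_sumr.
transitivity (\sum_(n < Mx) f (\sum_(m < My) (proj n x * proj m y))).
  exact: lin_sum_ord.
by apply: eq_bigr => n _; apply: lin_sum_ord.
Qed.

Lemma qmul x y : q (x * y) = q x * q y.
Proof.
have [Mx [My [ex ey exy]]] := decomp_lin x y qlin.
rewrite exy ex ey mulr_suml; apply: eq_bigr => n _.
rewrite mulr_sumr; apply: eq_bigr => m _.
exact: (@qmul_hom (n + m).+1 n m _ _ (ltnSn _) (projK _ _ _) (projK _ _ _)).
Qed.

Lemma qpow_char h : is_character (qpow HH q h).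
Proof.
have ql := qpow_lin h.
split => //; split.
  by rewrite (qpow_hom h (one_graded HH)) expr0 mul1r.
move=> x y.
have [Mx [My [ex ey exy]]] := decomp_lin x y ql.
rewrite exy ex ey mulr_suml; apply: eq_bigr => n _.
rewrite mulr_sumr; apply: eq_bigr => m _.
rewrite (qpow_hom h (mul_graded (projK _ _ _) (projK _ _ _))).
rewrite (qpow_hom h (projK _ _ _)) (qpow_hom h (projK _ _ _)) qmul exprD; ring.
Qed.

Lemma final_part : (forall x y, q (x * y) = q x * q y) /\
  (forall h : K, is_character (qpow HH q h) /\
     (forall (n : nat) (x : H), proj n x = x -> qpow HH q h x = h ^+ n * q x)).
Proof.
split; first exact: qmul.
move=> h; split; first exact: qpow_char.
move=> n x; exact: qpow_hom.
Qed.

End Q.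

Theorem mainTheorem1 (K : fieldType) (H : algType K) (HH : cgHopf H)
  (charK0 : [pchar K] =i pred0)
  (alpha : H -> K)
  (alpha_lin : forall (a : K) (x y : H), proj HH 1 x = x -> proj HH 1 y = y ->
                 alpha (a *: x + y) = a * alpha x + alpha y)
  (alpha_nz : exists x, proj HH 1 x = x /\ alpha x != 0)
  (q : H -> K) (hq : is_qalpha HH alpha q) :
  (forall x y : H, q (x * y) = q x * q y) /\
  (forall h : K,
     is_character (qpow HH q h) /\
     (forall (n : nat) (x : H), proj HH n x = x -> qpow HH q h x = h ^+ n * q x)).
Proof.
case: hq => qlin [q1 [_ qrec]].
exact: (@final_part K H HH charK0 q qlin q1 qrec).
Qed.
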